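(* For every program $\Omega$ with weight constraints, $\Omega$ and its translation $[\Omega]$ (a program with nested expressions) have the same answer sets.
   Context: Programs with nested expressions. A literal is a propositional atom $a$ or its classical negation $\neg a$; a set of literals is consistent if it contains no pair $a,\neg a$. Elementary formulas are literals, $\bot$ and $\top$. Formulas are built from elementary formulas using the unary connective $\mathit{not}$ (negation as failure) and the binary connectives '','' (conjunction) and '';'' (disjunction). A rule with nested expressions has the form $\mathit{Head}\leftarrow \mathit{Body}$ where $\mathit{Head},\mathit{Body}$ are formulas (a formula $F$ alone stands for $F\leftarrow\top$); a program with nested expressions is a set of such rules. For a consistent set $Z$ of literals: $Z\models l$ iff $l\in Z$ for a literal $l$; $Z\models\top$; $Z\not\models\bot$; $Z\models(F,G)$ iff $Z\models F$ and $Z\models G$; $Z\models(F;G)$ iff $Z\models F$ or $Z\models G$; $Z\models \mathit{not}\,F$ iff $Z\not\models F$. $Z$ satisfies a program if for every rule, $Z\models\mathit{Body}$ implies $Z\models\mathit{Head}$. The reduct $F^Z$: $F^Z=F$ for elementary $F$; $(F,G)^Z=F^Z,G^Z$; $(F;G)^Z=F^Z;G^Z$; $(\mathit{not}\,F)^Z=\bot$ if $Z\models F$ and $\top$ otherwise. $\Pi^Z$ is the set of rules $\mathit{Head}^Z\leftarrow\mathit{Body}^Z$ for the rules of $\Pi$. A consistent set $Z$ is an answer set of a program without $\mathit{not}$ if it is a minimal (under inclusion) consistent set of literals satisfying it; $Z$ is an answer set of an arbitrary program $\Pi$ if $Z$ is an answer set of $\Pi^Z$. Abbreviation: for formulas $F_1,\dots,F_n$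 and a set $X$ of subsets of $\{1,\dots,n\}$, $\langle F_1,\dots,F_n\rangle:X$ denotes the disjunction (;) over all $I\in X$ of the conjunctions (,) of the $F_i$, $i\in I$; the empty conjunction is $\top$ and the empty disjunction is $\bot$. Programs with weight constraints. A rule element is a literal $l$ (positive) or $\mathit{not}\ l$ (negative); $Z\models c$ for a rule element is as for formulas. A weight constraint is $L\le\{c_1=w_1,\dots,c_m=w_m\}\le U$ where $L,U$ are real numbers or $\pm\infty$, $c_1,\dots,c_m$ ($m\ge0$) are rule elements and $w_1,\dots,w_m$ are nonnegative reals; $L\le S$ abbreviates $L\le S\le+\infty$ and $S\le U$ abbreviates $-\infty\le S\le U$. A rule with weight constraints is $C_0\leftarrow C_1,\dots,C_n$ ($n\ge0$) with weight constraints $C_i$; the rule elements of $C_0$ are its head elements. A program with weight constraints is a set of such rules. A literal $c$ is identified with the constraint $1\le\{c=1\}$. A consistent set $Z$ of literals satisfies the weight constraint above if $L\le\sum_{j:Z\models c_j}w_j\le U$, and satisfies a program $\Omega$ if for every rule, whenever $Z$ satisfies $C_1,\dots,C_n$ it satisfies $C_0$. The reduct $(L\le S)^Z$ of $L\le S$ is $L^Z\le S'$ where $S'$ is obtained from $S$ by dropping all pairs $c=w$ with $c$ negative, and $L^Z$ is $L$ minus the sum of the weights $w$ of the pairs $c=w$ in $S$ with $c$ negative and $Z\models c$. The reduct of a rule $L_0\le S_0\le U_0\leftarrow L_1\le S_1\le U_1,\dots,L_n\le S_n\le U_n$ w.r.t. $Z$ is, if $Z\models S_i\le U_i$ for all $1\le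 i\le n$, the set of rules $l\leftarrow (L_1\le S_1)^Z,\dots,(L_n\le S_n)^Z$ for all positive head elements $l$ with $Z\models l$; otherwise it is empty. $\Omega^Z$ is the union of the reducts of the rules of $\Omega$. Such a program (literal heads, bodies of the form $L\le S$ with only positive elements) has a unique minimal set of literals satisfying it, its deductive closure $\mathit{cl}(\Omega^Z)$. A consistent set $Z$ of literals is an answer set of $\Omega$ if $Z\models\Omega$ and $\mathit{cl}(\Omega^Z)=Z$. Translation. For $S=\{c_1=w_1,\dots,c_m=w_m\}$ and real $w$: $[w\le S]=\langle c_1,\dots,c_m\rangle:\{I\subseteq\{1,\dots,m\}: w\le\sum_{i\in I}w_i\}$, $[w<S]=\langle c_1,\dots,c_m\rangle:\{I: w<\sum_{i\in I}w_i\}$, $[S\le U]=\mathit{not}\,[U<S]$, and $[L\le S\le U]=[L\le S],[S\le U]$. For a program $\Omega$ with weight constraints, $[\Omega]$ is obtained by replacing each rule $C_0\leftarrow C_1,\dots,C_n$ with $(l_1;\mathit{not}\,l_1),\dots,(l_p;\mathit{not}\,l_p),[C_0]\leftarrow[C_1],\dots,[C_n]$, where $l_1,\dots,l_p$ are the positive head elements of the rule. *)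

(* Defs.v *)
From Stdlib Require Import Reals List ClassicalDescription.
Import ListNotations.
Open Scope R_scope.
Set Implicit Arguments.

Inductive lit (A : Type) : Type :=
| LAtom : A -> lit A
| LNeg  : A -> lit A.       (* classical negation  ~a *)
Arguments LAtom {A}. Arguments LNeg {A}.

Definition litset (A : Type) := lit A -> Prop.

Definition consistent {A} (Z : litset A) : Prop :=
  forall a, ~ (Z (LAtom a) /\ Z (LNeg a)).

Definition subset {A} (Y Z : litset A) : Prop := forall l, Y l -> Z l.

Inductive formula (A : Type) : Type :=
| FLit : lit A -> formula A
| FBot : formula A
| FTop : formula A
| FNot : formula A -> formula A
| FAnd : formula A -> formula A -> formula A
| FOr  : formula A -> formula A -> formula A.
Arguments FLit {A}. Arguments FBot {A}. Arguments FTop {A}.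
Arguments FNot {A}. Arguments FAnd {A}. Arguments FOr {A}.

Fixpoint fsat {A} (Z : litset A) (F : formula A) : Prop :=
  match F with
  | FLit l => Z l
  | FBot => False
  | FTop => True
  | FNot G => ~ fsat Z G
  | FAnd G H => fsat Z G /\ fsat Z H
  | FOr G H => fsat Z G \/ fsat Z H
  end.

Fixpoint freduct {A} (Z : litset A) (F : formula A) : formula A :=
  match F with
  | FAnd G H => FAnd (freduct Z G) (freduct Z H)
  | FOr G H => FOr (freduct Z G) (freduct Z H)
  | FNot G => if excluded_middle_informative (fsat Z G) then FBot else FTop
  | _ => F
  end.

Record nrule (A : Type) := mkNRule { nhead : formula A; nbody : formula A }.
Arguments mkNRule {A}.

Definition nprogram (A : Type) := nrule A -> Prop.

Definition nsat {A} (Z : litset A) (P : nprogram A) : Prop :=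
  forall r, P r -> fsat Z (nbody r) -> fsat Z (nhead r).

Definition nreduct {A} (P : nprogram A) (Z : litset A) : nprogram A :=
  fun r' => exists r, P r /\ r' = mkNRule (freduct Z (nhead r)) (freduct Z (nbody r)).

Definition answer_set_notfree {A} (P : nprogram A) (Z : litset A) : Prop :=
  consistent Z /\ nsat Z P /\
  forall Y, consistent Y -> subset Y Z -> nsat Y P -> subset Z Y.

Definition n_answer_set {A} (P : nprogram A) (Z : litset A) : Prop :=
  answer_set_notfree (nreduct P Z) Z.

Fixpoint conjF {A} (l : list (formula A)) : formula A :=
  match l with
  | [] => FTop
  | [F] => F
  | F :: l' => FAnd F (conjF l')
  end.

Fixpoint disjF {A} (l : list (formula A)) : formula A :=
  match l with
  | [] => FBot
  | [F] => F
  | F :: l' => FOr F (disjF l')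
  end.

Inductive ebound := EFin (r : R) | EPInf | EMInf.

Inductive relem (A : Type) : Type :=
| RLit : lit A -> relem A
| RNot : lit A -> relem A.
Arguments RLit {A}. Arguments RNot {A}.

(* L <= {c1 = w1, ..., cm = wm} <= U ; the multiset S is a list of pairs *)
Record wconstr (A : Type) := mkWC
  { lo : ebound; elems : list (relem A * R); hi : ebound }.
Arguments mkWC {A}.

Definition esat {A} (Z : litset A) (c : relem A) : Prop :=
  match c with RLit l => Z l | RNot l => ~ Z l end.

Definition le_eb (L : ebound) (x : R) : Prop :=
  match L with EFin r => r <= x | EPInf => False | EMInf => True end.
Definition ge_eb (U : ebound) (x : R) : Prop :=
  match U with EFin r => x <= r | EPInf => True | EMInf => False end.

Definition wsum {A} (Z : litset A) (S : list (relem A * R)) : R :=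
  fold_right (fun p acc =>
    (if excluded_middle_informative (esat Z (fst p)) then snd p else 0) + acc) 0 S.

Definition wsat {A} (Z : litset A) (C : wconstr A) : Prop :=
  le_eb (lo C) (wsum Z (elems C)) /\ ge_eb (hi C) (wsum Z (elems C)).

Record wrule (A : Type) := mkWR { whead : wconstr A; wbody : list (wconstr A) }.
Arguments mkWR {A}.

Definition wprogram (A : Type) := wrule A -> Prop.

Definition wf_constr {A} (C : wconstr A) : Prop :=
  forall c w, In (c, w) (elems C) -> 0 <= w.
Definition wf_wprogram {A} (O : wprogram A) : Prop :=
  forall r, O r -> wf_constr (whead r) /\ forall C, In C (wbody r) -> wf_constr C.

Definition wsat_prog {A} (Z : litset A) (O : wprogram A) : Prop :=
  forall r, O r -> (forall C, In C (wbody r) -> wsat Z C) -> wsat Z (whead r).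

(* reduct: rules  l <- (L1 <= S1'), ..., (Ln <= Sn')  with positive elements only *)
Record prule (A : Type) := mkPR
  { phead : lit A; pbody : list (ebound * list (lit A * R)) }.
Arguments mkPR {A}.

Definition pos_part {A} (S : list (relem A * R)) : list (lit A * R) :=
  flat_map (fun p => match fst p with RLit l => [(l, snd p)] | RNot _ => [] end) S.

Definition neg_sum {A} (Z : litset A) (S : list (relem A * R)) : R :=
  fold_right (fun p acc =>
    (match fst p with
     | RNot l => if excluded_middle_informative (~ Z l) then snd p else 0
     | RLit _ => 0 end) + acc) 0 S.

Definition sub_eb (L : ebound) (x : R) : ebound :=
  match L with EFin r => EFin (r - x) | b => b end.

Definition creduct {A} (Z : litset A) (C : wconstr A) : ebound * list (lit A * R) :=
  (sub_eb (lo C) (neg_sum Z (elems C)), pos_part (elems C)).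

Definition wreduct {A} (O : wprogram A) (Z : litset A) : prule A -> Prop :=
  fun pr => exists r, O r /\
    (forall C, In C (wbody r) -> ge_eb (hi C) (wsum Z (elems C))) /\
    exists l w, In (RLit l, w) (elems (whead r)) /\ Z l /\
      pr = mkPR l (map (creduct Z) (wbody r)).

Definition psum {A} (Y : litset A) (T : list (lit A * R)) : R :=
  fold_right (fun p acc =>
    (if excluded_middle_informative (Y (fst p)) then snd p else 0) + acc) 0 T.

Definition psat {A} (Y : litset A) (pr : prule A) : Prop :=
  (forall b, In b (pbody pr) -> le_eb (fst b) (psum Y (snd b))) -> Y (phead pr).

Definition pclosed {A} (P : prule A -> Prop) (Y : litset A) : Prop :=
  forall pr, P pr -> psat Y pr.

Definition cl {A} (P : prule A -> Prop) : litset A :=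
  fun l => forall Y, pclosed P Y -> Y l.

Definition w_answer_set {A} (O : wprogram A) (Z : litset A) : Prop :=
  consistent Z /\ wsat_prog Z O /\ forall l, cl (wreduct O Z) l <-> Z l.

(* all sub-(multi)sets of S, given as subsequences (choice of index positions) *)
Fixpoint subseqs {X} (s : list X) : list (list X) :=
  match s with
  | [] => [[]]
  | x :: s' => let r := subseqs s' in map (cons x) r ++ r
  end.

Definition sum_w {X} (I : list (X * R)) : R := fold_right (fun p acc => snd p + acc) 0 I.

Definition elemF {A} (c : relem A) : formula A :=
  match c with RLit l => FLit l | RNot l => FNot (FLit l) end.

Definition tr_sel {A} (sel : R -> bool) (S : list (relem A * R)) : formula A :=
  disjF (map (fun I => conjF (map (fun p => elemF (fst p)) I))
             (filter (fun I => sel (sum_w I)) (subseqs S))).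

Definition leb_eb (L : ebound) (x : R) : bool :=
  match L with EFin r => if Rle_dec r x then true else false
  | EPInf => false | EMInf => true end.
Definition ltb_eb (U : ebound) (x : R) : bool :=
  match U with EFin r => if Rlt_dec r x then true else false
  | EPInf => false | EMInf => true end.

Definition tr_constr {A} (C : wconstr A) : formula A :=
  FAnd (tr_sel (leb_eb (lo C)) (elems C)) (FNot (tr_sel (ltb_eb (hi C)) (elems C))).

Definition pos_heads {A} (C : wconstr A) : list (lit A) := map fst (pos_part (elems C)).

Definition tr_rule {A} (r : wrule A) : nrule A :=
  mkNRule
    (conjF (map (fun l => FOr (FLit l) (FNot (FLit l))) (pos_heads (whead r))
            ++ [tr_constr (whead r)]))
    (conjF (map tr_constr (wbody r))).

Definition tr_prog {A} (O : wprogram A) : nprogram A :=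
  fun r' => exists r, O r /\ r' = tr_rule r.

(* Main.v *)
Require Import Defs.
From Stdlib Require Import Reals List ClassicalDescription Classical Lra.
Import ListNotations.
Open Scope R_scope.

Definition rsat {A} (Y Z : litset A) (c : relem A) : Prop :=
  match c with RLit l => Y l | RNot l => ~ Z l end.

Definition fsum {X} (Q : X -> Prop) (S : list (X * R)) : R :=
  fold_right (fun p acc =>
    (if excluded_middle_informative (Q (fst p)) then snd p else 0) + acc) 0 S.

Lemma fsum_cons {X} (Q : X -> Prop) x s :
  fsum Q (x :: s) = (if excluded_middle_informative (Q (fst x)) then snd x else 0) + fsum Q s.
Proof. reflexivity. Qed.
Lemma sum_w_cons {X} (x : X * R) s : sum_w (x :: s) = snd x + sum_w s.
Proof. reflexivity. Qed.
Lemma psum_cons {A} (Y : litset A) x s :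
  psum Y (x :: s) = (if excluded_middle_informative (Y (fst x)) then snd x else 0) + psum Y s.
Proof. reflexivity. Qed.
Lemma wsum_cons {A} (Y : litset A) x s :
  wsum Y (x :: s) = (if excluded_middle_informative (esat Y (fst x)) then snd x else 0) + wsum Y s.
Proof. reflexivity. Qed.
Lemma neg_sum_cons {A} (Z : litset A) x s :
  neg_sum Z (x :: s) = (match fst x with
     | RNot l => if excluded_middle_informative (~ Z l) then snd x else 0
     | RLit _ => 0 end) + neg_sum Z s.
Proof. reflexivity. Qed.
Lemma pos_part_lit {A} (l : lit A) w s : pos_part ((RLit l, w) :: s) = (l, w) :: pos_part s.
Proof. reflexivity. Qed.
Lemma pos_part_not {A} (l : lit A) w s : pos_part ((RNot l, w) :: s) = pos_part s.
Proof. reflexivity. Qed.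

Lemma fsat_freduct_self {A} (Z : litset A) F : fsat Z (freduct Z F) <-> fsat Z F.
Proof.
  induction F; simpl; try tauto.
  destruct (excluded_middle_informative (fsat Z F)); simpl; tauto.
Qed.

Lemma conjF_red {A} (Y Z : litset A) l :
  fsat Y (freduct Z (conjF l)) <-> (forall F, In F l -> fsat Y (freduct Z F)).
Proof.
  induction l as [|F l IH].
  - simpl. split; [intros _ F []|intros _; exact I].
  - destruct l as [|G l'].
    + simpl. split; [intros H F0 [<-|[]]; exact H| intros H; apply H; auto].
    + change (fsat Y (freduct Z F) /\ fsat Y (freduct Z (conjF (G :: l')))
        <-> (forall F0, In F0 (F :: G :: l') -> fsat Y (freduct Z F0))).
      rewrite IH. split.
      * intros [H1 H2] F0 [<-|Hin]; auto.
      * intros H; split; [apply H; left; auto| intros F0 Hin; apply H; right; auto].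
Qed.

Lemma disjF_red {A} (Y Z : litset A) l :
  fsat Y (freduct Z (disjF l)) <-> (exists F, In F l /\ fsat Y (freduct Z F)).
Proof.
  induction l as [|F l IH].
  - simpl. split; [intros []|intros [F [[] _]]].
  - destruct l as [|G l'].
    + simpl. split; [intros H; exists F; auto| intros [F0 [[<-|[]] H]]; exact H].
    + change (fsat Y (freduct Z F) \/ fsat Y (freduct Z (disjF (G :: l')))
        <-> (exists F0, In F0 (F :: G :: l') /\ fsat Y (freduct Z F0))).
      rewrite IH. split.
      * intros [H|[F0 [H1 H2]]]; [exists F; split; [left|]; auto| exists F0; split; [right|]; auto].
      * intros [F0 [[<-|Hin] H]]; [left; auto|right; exists F0; auto].
Qed.

Lemma elemF_red {A} (Y Z : litset A) c : fsat Y (freduct Z (elemF c)) <-> rsat Y Z c.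
Proof.
  destruct c; simpl; [tauto|].
  destruct (excluded_middle_informative (Z l)); simpl; tauto.
Qed.

Lemma tr_sel_red {A} (Y Z : litset A) sel S :
  fsat Y (freduct Z (tr_sel sel S)) <->
  exists I, In I (subseqs S) /\ sel (sum_w I) = true /\ forall p, In p I -> rsat Y Z (fst p).
Proof.
  unfold tr_sel. rewrite disjF_red. split.
  - intros [F [HF HS]]. apply in_map_iff in HF. destruct HF as [I [<- HI]].
    apply filter_In in HI. destruct HI as [HI Hs].
    exists I. split; [exact HI|split;[exact Hs|]].
    rewrite conjF_red in HS. intros p Hp. apply elemF_red. apply HS.
    apply (in_map (fun p => elemF (fst p))). exact Hp.
  - intros [I [HI [Hs Hp]]]. exists (conjF (map (fun p => elemF (fst p)) I)). split.
    + apply (in_map (fun I => conjF (map (fun p => elemF (fst p)) I))).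
      apply filter_In. auto.
    + apply conjF_red. intros F HF. apply in_map_iff in HF. destruct HF as [p [<- Hp']].
      apply elemF_red. auto.
Qed.

Definition nonneg {X} (S : list (X * R)) := forall p, In p S -> 0 <= snd p.

Lemma sub_le {X} (Q : X -> Prop) S : nonneg S -> forall I, In I (subseqs S) ->
  (forall p, In p I -> Q (fst p)) -> sum_w I <= fsum Q S.
Proof.
  induction S as [|x s IH]; intros Hn I HI HQ.
  - simpl in HI. destruct HI as [<-|[]]. simpl. lra.
  - assert (Hn' : nonneg s) by (intros p Hp; apply Hn; right; auto).
    assert (Hx : 0 <= snd x) by (apply Hn; left; auto).
    simpl in HI. apply in_app_or in HI. destruct HI as [HI|HI].
    + apply in_map_iff in HI. destruct HI as [I' [<- HI']].
      rewrite fsum_cons, sum_w_cons.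
      destruct (excluded_middle_informative (Q (fst x))) as [q|nq].
      * assert (sum_w I' <= fsum Q s).
        { apply IH; [exact Hn'| auto | intros p Hp; apply HQ; right; auto]. }
        lra.
      * exfalso. apply nq. apply HQ. left. auto.
    + rewrite fsum_cons.
      assert (sum_w I <= fsum Q s) by (apply IH; auto).
      destruct (excluded_middle_informative (Q (fst x))); lra.
Qed.

Lemma sub_ex {X} (Q : X -> Prop) S : exists I, In I (subseqs S) /\
  (forall p, In p I -> Q (fst p)) /\ sum_w I = fsum Q S.
Proof.
  induction S as [|x s [I [HI [HQ Hs]]]].
  - exists []. simpl. split; [auto|split;[intros _ []|reflexivity]].
  - rewrite fsum_cons.
    destruct (excluded_middle_informative (Q (fst x))) as [q|nq].
    + exists (x :: I). split; [simpl; apply in_or_app; left; apply in_map; auto|].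
      split; [intros p [<-|Hp]; auto|]. rewrite sum_w_cons. lra.
    + exists I. split; [simpl; apply in_or_app; right; auto|].
      split; [auto|]. lra.
Qed.

Definition monosel (sel : R -> bool) := forall x y, x <= y -> sel x = true -> sel y = true.

Lemma leb_mono L : monosel (leb_eb L).
Proof.
  intros x y Hxy H. destruct L; simpl in *; try discriminate; try reflexivity.
  destruct (Rle_dec r x); [|discriminate]. destruct (Rle_dec r y); [reflexivity|lra].
Qed.

Lemma ltb_mono L : monosel (ltb_eb L).
Proof.
  intros x y Hxy H. destruct L; simpl in *; try discriminate; try reflexivity.
  destruct (Rlt_dec r x); [|discriminate]. destruct (Rlt_dec r y); [reflexivity|lra].
Qed.

Lemma sel_iff {X} (Q : X -> Prop) sel S : monosel sel -> nonneg S ->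
  (exists I, In I (subseqs S) /\ sel (sum_w I) = true /\ forall p, In p I -> Q (fst p))
  <-> sel (fsum Q S) = true.
Proof.
  intros Hm Hn. split.
  - intros [I [HI [Hs HQ]]]. apply (Hm (sum_w I)); auto. apply sub_le; auto.
  - intros H. destruct (sub_ex Q S) as [I [HI [HQ Hs]]]. exists I.
    split; [auto|split; [rewrite Hs; auto|auto]].
Qed.

Lemma fsum_dec {A} (Y Z : litset A) S :
  fsum (rsat Y Z) S = psum Y (pos_part S) + neg_sum Z S.
Proof.
  induction S as [|[c w] s IH].
  - simpl. lra.
  - destruct c as [l|l].
    + rewrite fsum_cons, pos_part_lit, psum_cons, neg_sum_cons, IH. cbn [fst snd rsat].
      destruct (excluded_middle_informative (Y l)); lra.
    + rewrite fsum_cons, pos_part_not, neg_sum_cons, IH. cbn [fst snd rsat].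
      destruct (excluded_middle_informative (~ Z l)); lra.
Qed.

Lemma wsum_dec {A} (Z : litset A) S :
  wsum Z S = psum Z (pos_part S) + neg_sum Z S.
Proof.
  induction S as [|[c w] s IH].
  - simpl. lra.
  - destruct c as [l|l].
    + rewrite wsum_cons, pos_part_lit, psum_cons, neg_sum_cons, IH. cbn [fst snd esat].
      destruct (excluded_middle_informative (Z l)); lra.
    + rewrite wsum_cons, pos_part_not, neg_sum_cons, IH. cbn [fst snd esat].
      destruct (excluded_middle_informative (~ Z l)); lra.
Qed.

Lemma pos_part_In {A} (S : list (relem A * R)) l w :
  In (l, w) (pos_part S) <-> In (RLit l, w) S.
Proof.
  induction S as [|[c w'] s IH].
  - simpl. tauto.
  - destruct c as [l'|l'].
    + rewrite pos_part_lit. simpl. rewrite IH.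
      split; (intros [H|H]; [left; congruence|right; auto]).
    + rewrite pos_part_not. simpl. rewrite IH.
      split; [intros H; right; auto|intros [H|H]; [discriminate|auto]].
Qed.

Lemma pos_nonneg {A} (C : wconstr A) : wf_constr C -> nonneg (pos_part (elems C)).
Proof.
  intros Hwf [l w] H. apply pos_part_In in H. exact (Hwf _ _ H).
Qed.

Lemma wf_nonneg {A} (C : wconstr A) : wf_constr C -> nonneg (elems C).
Proof. intros Hwf [c w] H. exact (Hwf _ _ H). Qed.

Lemma psum_mono {A} (Y Y' : litset A) T : (forall l, Y l -> Y' l) -> nonneg T ->
  psum Y T <= psum Y' T.
Proof.
  intros HY. induction T as [|x s IH]; intros Hn.
  - simpl. lra.
  - rewrite !psum_cons.
    assert (psum Y s <= psum Y' s) by (apply IH; intros p Hp; apply Hn; right; auto).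
    assert (0 <= snd x) by (apply Hn; left; auto).
    destruct (excluded_middle_informative (Y (fst x)));
    destruct (excluded_middle_informative (Y' (fst x))); try lra.
    exfalso; auto.
Qed.

Lemma psum_ext {A} (Y Y' : litset A) T : (forall p, In p T -> (Y (fst p) <-> Y' (fst p))) ->
  psum Y T = psum Y' T.
Proof.
  induction T as [|x s IH]; intros H.
  - reflexivity.
  - rewrite !psum_cons, IH by (intros p Hp; apply H; right; auto).
    destruct (H x (or_introl eq_refl)) as [H1 H2].
    destruct (excluded_middle_informative (Y (fst x)));
    destruct (excluded_middle_informative (Y' (fst x))); try lra; exfalso; auto.
Qed.

Lemma le_eb_mono L x y : x <= y -> le_eb L x -> le_eb L y.
Proof. destruct L; simpl; auto. lra. Qed.

Lemma le_eb_sub L n p : le_eb (sub_eb L n) p <-> le_eb L (p + n).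
Proof. destruct L; simpl; [split; intros; lra|tauto|tauto]. Qed.

Lemma leb_iff L x : leb_eb L x = true <-> le_eb L x.
Proof.
  destruct L; simpl.
  - destruct (Rle_dec r x); split; intros; auto; try discriminate; lra.
  - split; [discriminate|tauto].
  - tauto.
Qed.

Lemma ltb_iff U x : ltb_eb U x = true <-> ~ ge_eb U x.
Proof.
  destruct U; simpl.
  - destruct (Rlt_dec r x); split; intros; auto; try discriminate; lra.
  - split; [discriminate|tauto].
  - tauto.
Qed.

Lemma fand_red {A} (Y Z : litset A) F G :
  fsat Y (freduct Z (FAnd F G)) <-> fsat Y (freduct Z F) /\ fsat Y (freduct Z G).
Proof. simpl. tauto. Qed.

Lemma fnot_red {A} (Y Z : litset A) F :
  fsat Y (freduct Z (FNot F)) <-> ~ fsat Z F.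
Proof. simpl. destruct (excluded_middle_informative (fsat Z F)); simpl; tauto. Qed.

Lemma for_red {A} (Y Z : litset A) l :
  fsat Y (freduct Z (FOr (FLit l) (FNot (FLit l)))) <-> Y l \/ ~ Z l.
Proof. simpl. destruct (excluded_middle_informative (Z l)); simpl; tauto. Qed.

Lemma constr_red {A} (Y Z : litset A) C : wf_constr C ->
  fsat Y (freduct Z (tr_constr C)) <->
  le_eb (lo C) (psum Y (pos_part (elems C)) + neg_sum Z (elems C)) /\
  ge_eb (hi C) (wsum Z (elems C)).
Proof.
  intros Hwf. unfold tr_constr. rewrite fand_red, fnot_red, tr_sel_red.
  assert (HZ : fsat Z (tr_sel (ltb_eb (hi C)) (elems C)) <-> ~ ge_eb (hi C) (wsum Z (elems C))).
  { rewrite <- (fsat_freduct_self Z). rewrite tr_sel_red.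
    rewrite (sel_iff (rsat Z Z)); [|apply ltb_mono|apply wf_nonneg; auto].
    rewrite fsum_dec, <- wsum_dec. apply ltb_iff. }
  rewrite HZ.
  rewrite (sel_iff (rsat Y Z)); [|apply leb_mono|apply wf_nonneg; auto].
  rewrite fsum_dec, leb_iff.
  split; intros [H1 H2]; split; auto.
  - apply NNPP; auto.
Qed.

Definition RB {A} (Y Z : litset A) (r : wrule A) : Prop :=
  forall C, In C (wbody r) ->
    le_eb (lo C) (psum Y (pos_part (elems C)) + neg_sum Z (elems C)) /\
    ge_eb (hi C) (wsum Z (elems C)).

Definition RH {A} (Y Z : litset A) (r : wrule A) : Prop :=
  (forall l w, In (RLit l, w) (elems (whead r)) -> Y l \/ ~ Z l) /\
  le_eb (lo (whead r)) (psum Y (pos_part (elems (whead r))) + neg_sum Z (elems (whead r))) /\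
  ge_eb (hi (whead r)) (wsum Z (elems (whead r))).

Lemma head_red {A} (Y Z : litset A) r : wf_constr (whead r) ->
  fsat Y (freduct Z (nhead (tr_rule r))) <-> RH Y Z r.
Proof.
  intros Hwf. unfold tr_rule, RH; cbn [nhead]. rewrite conjF_red.
  split.
  - intros H. split.
    + intros l w Hin. apply for_red. apply H. apply in_or_app; left.
      apply (in_map (fun l => FOr (FLit l) (FNot (FLit l)))).
      unfold pos_heads. apply in_map_iff. exists (l, w). split; [reflexivity|].
      apply pos_part_In; auto.
    + apply constr_red; auto. apply H. apply in_or_app; right; left; auto.
  - intros [H1 H2] F HF. apply in_app_or in HF. destruct HF as [HF|[<-|[]]].
    + apply in_map_iff in HF; destruct HF as [l [<- Hl]]. apply for_red.
      unfold pos_heads in Hl; apply in_map_iff in Hl; destruct Hl as [[l' w] [Heq Hin]].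
      simpl in Heq; subst l'. apply pos_part_In in Hin. eauto.
    + apply constr_red; auto.
Qed.

Lemma body_red {A} (Y Z : litset A) r : (forall C, In C (wbody r) -> wf_constr C) ->
  fsat Y (freduct Z (nbody (tr_rule r))) <-> RB Y Z r.
Proof.
  intros Hwf. unfold tr_rule, RB; cbn [nbody]. rewrite conjF_red.
  split; intros H C HC.
  - apply constr_red; [auto|]. apply H. apply in_map; auto.
  - apply in_map_iff in HC; destruct HC as [C' [<- HC']]; apply constr_red; auto.
Qed.

Lemma nsat_red {A} (O : wprogram A) (Y Z : litset A) : wf_wprogram O ->
  nsat Y (nreduct (tr_prog O) Z) <-> forall r, O r -> RB Y Z r -> RH Y Z r.
Proof.
  intros Hwf. split.
  - intros H r Or HB. destruct (Hwf r Or) as [Hh Hb].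
    apply head_red; auto.
    apply (H (mkNRule (freduct Z (nhead (tr_rule r))) (freduct Z (nbody (tr_rule r))))).
    + exists (tr_rule r). split; [exists r; auto|reflexivity].
    + cbn [nbody]. apply body_red; auto.
  - intros H r' [r0 [[r [Or ->]] ->]]. cbn [nhead nbody]. destruct (Hwf r Or) as [Hh Hb].
    intros HB. apply head_red; auto. apply H; auto. apply body_red in HB; auto.
Qed.

Lemma wsat_dec {A} (Z : litset A) C : wsat Z C <->
  le_eb (lo C) (psum Z (pos_part (elems C)) + neg_sum Z (elems C)) /\
  ge_eb (hi C) (wsum Z (elems C)).
Proof. unfold wsat. rewrite <- wsum_dec. tauto. Qed.

Theorem theorem1 (A : Type) (O : wprogram A) :
  wf_wprogram O ->
  forall Z : litset A, w_answer_set O Z <-> n_answer_set (tr_prog O) Z.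
Proof.
  intros Hwf Z.
  assert (Hsat : wsat_prog Z O <-> nsat Z (nreduct (tr_prog O) Z)).
  { rewrite nsat_red by exact Hwf. unfold wsat_prog, RB, RH. split.
    - intros H r Or HB. split.
      + intros l w _. apply classic.
      + apply wsat_dec. apply H; auto. intros C HC. apply wsat_dec. auto.
    - intros H r Or HB. apply wsat_dec. apply H; auto. intros C HC. apply wsat_dec; auto. }
  unfold w_answer_set, n_answer_set, answer_set_notfree. split.
  - intros [Hc [Hs Hcl]]. split; [exact Hc|split; [apply Hsat; exact Hs|]].
    intros Y HcY HYZ HY. rewrite nsat_red in HY by exact Hwf.
    intros l Zl. apply Hcl in Zl. apply Zl.
    intros pr [r [Or [Hhi [l' [w [Hin [Zl' ->]]]]]]]. unfold psat. cbn [phead pbody].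
    intros Hb. destruct (Hwf r Or) as [Hh Hbw].
    assert (HR : RH Y Z r).
    { apply HY; auto. intros C HC. split; [|apply Hhi; auto].
      specialize (Hb (creduct Z C) (in_map _ _ _ HC)). unfold creduct in Hb; cbn [fst snd] in Hb.
      apply le_eb_sub in Hb. exact Hb. }
    destruct HR as [HR _]. destruct (HR l' w Hin); [assumption|contradiction].
  - intros [Hc [Hs Hmin]].
    assert (HclZ : forall l, cl (wreduct O Z) l -> Z l).
    { intros l Hl. apply Hl. intros pr [r [Or [_ [l' [w [_ [Zl' ->]]]]]]]. intros _. exact Zl'. }
    split; [exact Hc|split; [apply Hsat; exact Hs|]].
    assert (HYZ : subset (cl (wreduct O Z)) Z) by (intros l0; apply HclZ).
    assert (HcY : consistent (cl (wreduct O Z)))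
      by (intros a [H1 H2]; apply (Hc a); split; apply HYZ; auto).
    assert (Hsub : subset Z (cl (wreduct O Z))).
    { apply (Hmin _ HcY HYZ).
      rewrite nsat_red by exact Hwf. intros r Or HB.
      destruct (Hwf r Or) as [Hh Hbw].
      assert (HBZ : RB Z Z r).
      { intros C HC. destruct (HB C HC) as [H1 H2]. split; [|exact H2].
        eapply le_eb_mono; [|exact H1]. apply Rplus_le_compat_r, psum_mono;
          [exact HYZ| apply pos_nonneg; auto]. }
      rewrite nsat_red in Hs by exact Hwf.
      destruct (Hs r Or HBZ) as [_ [Hlo Hhi]].
      assert (Hpos : forall l0 w, In (RLit l0, w) (elems (whead r)) -> Z l0 ->
                cl (wreduct O Z) l0).
      { intros l0 w Hin Zl0 Y' HY'.
        apply (HY' (mkPR l0 (map (creduct Z) (wbody r)))).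
        - exists r. split; [exact Or|split; [intros C HC; apply HB; auto|]].
          exists l0, w. auto.
        - cbn [pbody]. intros b Hb. apply in_map_iff in Hb. destruct Hb as [C [<- HC]].
          unfold creduct; cbn [fst snd]. apply le_eb_sub. destruct (HB C HC) as [H1 _].
          eapply le_eb_mono; [|exact H1]. apply Rplus_le_compat_r. apply psum_mono.
          + intros l1 Hl1. apply Hl1. exact HY'.
          + apply pos_nonneg; auto. }
      split; [|split; [|exact Hhi]].
      + intros l0 w Hin. destruct (classic (Z l0)); [left; eauto|right; auto].
      + replace (psum (cl (wreduct O Z)) (pos_part (elems (whead r))))
          with (psum Z (pos_part (elems (whead r)))); [exact Hlo|].
        apply psum_ext. intros [l0 w] Hin. apply pos_part_In in Hin. cbn [fst].
        split; [eauto|apply HYZ]. }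
    intros l; split; [apply HclZ|apply Hsub].
Qed.
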